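(* Let $G=(V,E)$, the token alphabet, the test distribution $\mathcal{D}_{\mathrm{test}}$, the program $P_{\mathrm{prog}}$, its greedy generation $\mathrm{prog}(\cdot)$ and the decoding map $\mathrm{dec}$ be as in the context. For every $k\ge1$ and every input–label pair $(\widetilde{\mathtt{inp}}^k,\widetilde{\mathtt{lab}}^k)$ in the support of $\mathcal{D}_{\mathrm{test}}$, $\mathrm{dec}(\mathrm{prog}(\widetilde{\mathtt{inp}}^k))=\mathrm{dec}(\widetilde{\mathtt{lab}}^k)$. Consequently $\mathrm{prog}(\cdot)$ minimizes the few-shot testing losses $L^k_{\mathrm{test}}:=-\Pr_{\mathcal{D}_{\mathrm{test}}}\big[\mathrm{dec}(\mathrm{prog}(\widetilde{\mathtt{inp}}^k))=\mathrm{dec}(\widetilde{\mathtt{lab}}^k)\big]$, $k=1,\dots,K-1$.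
   Context: Causal structure. Let $\mathcal{V}_{\mathrm{all}}$ be a finite alphabet of vertex symbols and $G=(V,E)$ a directed graph with $V\subseteq\mathcal{V}_{\mathrm{all}}$. Every $v\in\mathcal{V}_{\mathrm{all}}$ has a finite value set $\mathtt{VALS}(v)\subset\mathbb{Z}$ and a finite nonempty set $\mathtt{CONT}(v)$ of context tokens; these sets are pairwise disjoint and disjoint from vertex and value symbols. Each edge $e=(v_1,v_2)\in E$ carries an operation $\mathtt{op}(e)$ of the form $q\mapsto q+c_e$ ($c_e\in\mathbb{Z}$) mapping $\mathtt{VALS}(v_1)$ into $\mathtt{VALS}(v_2)$. Chains are $\mathcal{T}(G)=\{[v_1,\dots,v_n]:(v_i,v_{i+1})\in E\}$; the depth $N$ is the maximal chain length. Special tokens: $o^{\mathrm{eq}}$ (''=''), $o^{\mathrm{cm}}$ ('',''), $o^{\mathrm{qu}}$ (''?''), $o^{\mathrm{dlm}}$ (newline). Test sequences: a chain $[v_1,\dots,v_N]\in\mathcal{T}(G)$ of length $N$ with $q_1\sim\mathrm{Uniform}(\mathtt{VALS}(v_1))$ and $q_i=\mathtt{op}(v_{i-1},v_i)(q_{i-1})$, giving $[v_1,q_1,\dots,v_N,q_N]$. Processing: $[v_1,q_1,\dots,v_L,q_L]$ becomes $[v_L,o^{\mathrm{eq}},o^{\mathrm{qu}},c(v_1)_1,\dots,c(v_1)_{l_1},v_1,o^{\mathrm{eq}},q_1,o^{\mathrm{cm}},\dots,o^{\mathrm{cm}},c(v_L)_1,\dots,c(v_L)_{l_L},v_L,o^{\mathrm{eq}},q_L]$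 with independently $l_i\sim\mathrm{Uniform}\{1,\dots,|\mathtt{CONT}(v_i)|\}$ and $c(v_i)_1,\dots,c(v_i)_{l_i}$ drawn from $\mathtt{CONT}(v_i)$ without replacement. For $k\in\{0,\dots,K\}$, take $k+1$ test sequences with the same vertex list and independent values/context tokens; $\widetilde{\mathtt{inp}}^k$ is $\widetilde{\mathtt{seq}}^{(1)},o^{\mathrm{dlm}},\dots,o^{\mathrm{dlm}},\widetilde{\mathtt{seq}}^{(k)},o^{\mathrm{dlm}}$ followed by the prefix $[v_N,o^{\mathrm{eq}},o^{\mathrm{qu}},c(v_1)^{(k+1)}_{1..l_1},v_1,o^{\mathrm{eq}},q^{(k+1)}_1,o^{\mathrm{cm}}]$ of the processed $(k+1)$-th sequence; $\widetilde{\mathtt{lab}}^k$ is the remainder of that processed sequence. This defines $\mathcal{D}_{\mathrm{test}}$. The map $\mathrm{dec}$ extracts from a processed token string the list of vertex–value pairs $[v_2,q_2,\dots,v_N,q_N]$ (the vertex and value in each occurrence of ''vertex, $o^{\mathrm{eq}}$, value''). Program $P_{\mathrm{prog}}(\cdot\mid z_{1:T})$ (for sentences with at least one complete previous shot): (i) if $z_T=o^{\mathrm{cm}}$, then $z_{T-3}$ is a vertex $v_i$; find $v_i$ in previous shots and the vertex $v_{i+1}$ following it; output $\mathrm{Uniform}(\mathtt{CONT}(v_{i+1}))$. (ii) if $z_{T-k+1:T}=[c(v_j)_1,\dots,c(v_j)_k]$ is a run of context tokens of $v_j$, output $\mathrm{Uniform}(\mathtt{CONT}(v_j)\cup\{v_j\}\setminus\{c(v_j)_1,\dots,c(v_j)_k\})$.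 (iii) if $z_T$ is a vertex, output $o^{\mathrm{eq}}$ with probability 1. (iv) if $z_T=o^{\mathrm{eq}}$, $z_{T-1}=v_j$: if $v_j\notin V$ or $v_j$ is the first vertex of $V$ in the current sequence, output $\mathrm{Uniform}(\mathtt{VALS}(v_j))$; otherwise, with $v_{j_1}$ (value $q_{j_1}$) the nearest preceding vertex of $V$ in the current sequence, output $\mathtt{op}(v_{j_1},v_j)(q_{j_1})$ with probability 1. (v) if $z_T$ is a value, output $o^{\mathrm{cm}}$ with probability 1. The generation $\mathrm{prog}(\widetilde{\mathtt{inp}}^k)$ is greedy decoding: repeatedly append a token of maximal probability under $P_{\mathrm{prog}}$ (ties broken arbitrarily), until the value of the goal vertex (the vertex named at the start of the current sequence) has been produced. *)

(* Defs.v *)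
From HB Require Import structures.
From mathcomp Require Import all_boot all_order all_algebra.
Set Implicit Arguments. Unset Strict Implicit. Unset Printing Implicit Defensive.
Import Order.TTheory GRing.Theory Num.Theory.
Local Open Scope ring_scope.

(* Token alphabet over a vertex alphabet Vt:
   vertex symbols, value symbols (integers), context tokens
   (Ctx v i is the i-th context token of vertex v; CONT(v) = {Ctx v i | i < ncont v},
   so the CONT(v) are pairwise disjoint and disjoint from vertices/values),
   and the special tokens "=", ",", "?", newline. *)
Inductive token (Vt : Type) :=
  | Vert of Vt | Val of int | Ctx of Vt & nat | TEq | TCm | TQu | TDlm.
Arguments Vert {Vt}. Arguments Val {Vt}. Arguments Ctx {Vt}.
Arguments TEq {Vt}. Arguments TCm {Vt}. Arguments TQu {Vt}. Arguments TDlm {Vt}.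

Section TokEq.
Variable Vt : eqType.
Definition token_eqb (a b : token Vt) : bool :=
  match a, b with
  | Vert u, Vert v => u == v
  | Val x, Val y => x == y
  | Ctx u i, Ctx v j => (u == v) && (i == j)
  | TEq, TEq | TCm, TCm | TQu, TQu | TDlm, TDlm => true
  | _, _ => false
  end.
Lemma token_eqP : Equality.axiom token_eqb.
Proof.
case=> [u|x|u i| | | |] [v|y|v j| | | |] /=; try by constructor.
- by apply: (iffP eqP) => [->|[]].
- by apply: (iffP eqP) => [->|[]].
- by apply: (iffP andP) => [[/eqP-> /eqP->]|[-> ->]].
Qed.
HB.instance Definition _ := hasDecEq.Build (token Vt) token_eqP.
End TokEq.

Section Setting.
Variable Vt : finType.
Variable inV : pred Vt.
Variable E : rel Vt.
Variable c : Vt -> Vt -> int.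
Variable vals : Vt -> seq int.
Variable ncont : Vt -> nat.

Local Notation tok := (token Vt).

Definition op (u v : Vt) (q : int) : int := q + c u v.
Definition CONT (v : Vt) : seq tok := [seq Ctx v i | i <- iota 0 (ncont v)].
Definition VALS (v : Vt) : seq tok := [seq Val q | q <- vals v].

Definition unif (s : seq tok) : option (tok -> rat) :=
  if undup s is [::] then None
  else Some (fun t => if t \in s then (size (undup s))%:R^-1 else 0).
Definition point (t0 : tok) : tok -> rat := fun t => if t == t0 then 1 else 0.

(* the current sequence: tokens after the last newline *)
Fixpoint current (z : seq tok) : seq tok :=
  match z with
  | [::] => [::]
  | t :: z' => if TDlm \in z' then current z' else if t == TDlm then z' else z
  end.
(* the previous shots: everything up to and including the last newline *)
Definition prev_shots (z : seq tok) : seq tok := take (size z - size (current z)) z.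

Fixpoint first_vert (s : seq tok) : option Vt :=
  match s with
  | [::] => None
  | Vert v :: _ => Some v
  | _ :: s' => first_vert s'
  end.

Definition isVinV (t : tok) : bool := if t is Vert v then inV v else false.
Definition isCtxOf (u : Vt) (t : tok) : bool := if t is Ctx w _ then w == u else false.

Definition rule_i (z : seq tok) (vi : Vt) : option (tok -> rat) :=
  let p := prev_shots z in
  let i := index (Vert vi) p in
  if (i < size p)%N then
    match first_vert (drop i.+1 p) with
    | Some w => unif (CONT w)
    | None => None
    end
  else None.

(* rule (ii): maximal trailing run of context tokens of u *)
Definition rule_ii (rz : seq tok) (u : Vt) : option (tok -> rat) :=
  let run := take (find (fun t => ~~ isCtxOf u t) rz) rz in
  unif [seq t <- CONT u ++ [:: Vert u] | t \notin run].

(* rule (iv): z_T is "=", z_{T-1} is a vertex v_j (rb = reversed part of the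
   current sequence strictly before that occurrence of v_j) *)
Definition rule_iv (vj : Vt) (rb : seq tok) : option (tok -> rat) :=
  if ~~ inV vj || ~~ has isVinV rb then unif (VALS vj)
  else
    let k := find isVinV rb in
    match nth TDlm rb k, rev (take k rb) with
    | Vert u, TEq :: Val q :: _ => Some (point (Val (op u vj q)))
    | _, _ => None
    end.

(* The program P_prog(. | z); None = not defined on this sentence. *)
Definition Pprog (z : seq tok) : option (tok -> rat) :=
  if TDlm \notin z then None else
  match rev z with
  | TCm :: _ :: _ :: Vert vi :: _ => rule_i z vi
  | (Ctx u _ :: _) as rz => rule_ii rz u
  | Vert _ :: _ => Some (point TEq)
  | TEq :: Vert _ :: _ =>
      match rev (current z) with
      | TEq :: Vert vj :: rb => rule_iv vj rb
      | _ => None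
      end
  | Val _ :: _ => Some (point TCm)
  | _ => None
  end.

Definition is_argmax (P : tok -> rat) (t : tok) : Prop := forall t', P t' <= P t.

(* the value of the goal vertex (named at the start of the current sequence)
   has just been produced *)
Definition goal_done (z : seq tok) : bool :=
  match current z, rev (current z) with
  | Vert g :: _, Val _ :: TEq :: Vert v :: _ => v == g
  | _, _ => false
  end.

(* out is a greedy generation of prog from inp (for some tie breaking):
   each appended token has maximal probability under P_prog, generation
   stops exactly when the goal value has first been produced. *)
Definition greedy_gen (inp out : seq tok) : Prop :=
  [/\ forall i, (i < size out)%N ->
        exists P, Pprog (inp ++ take i out) = Some P /\ is_argmax P (nth TDlm out i),
      forall i, (i < size out)%N -> ~~ goal_done (inp ++ take i out)
    & goal_done (inp ++ out)].

Fixpoint dec (s : seq tok) : seq (Vt * int) :=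
  match s with
  | Vert v :: TEq :: Val q :: s' => (v, q) :: dec s'
  | _ :: s' => dec s'
  | [::] => [::]
  end.

Definition is_chain (ws : seq Vt) : bool :=
  if ws is w :: ws' then all inV ws && path E w ws' else false.

(* values q_2..q_n along the chain v :: vs starting from value q of v *)
Fixpoint chain_vals (v : Vt) (q : int) (vs : seq Vt) : seq int :=
  match vs with
  | [::] => [::]
  | w :: ws => op v w q :: chain_vals w (op v w q) ws
  end.

(* a possible draw of the context tokens c(v)_1..c(v)_l, l in {1..|CONT v|},
   drawn without replacement *)
Definition ctx_ok (v : Vt) (cs : seq tok) : bool :=
  [&& (0 < size cs)%N, uniq cs & all (fun t => t \in CONT v) cs].

(* a test shot for chain v1 :: vs: the initial value q1 and context lists *)
Definition shot_ok (v1 : Vt) (vs : seq Vt) (sh : int * seq (seq tok)) : bool :=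
  [&& sh.1 \in vals v1, size sh.2 == size (v1 :: vs)
    & all (fun p => ctx_ok p.1 p.2) (zip (v1 :: vs) sh.2)].

Fixpoint joincm (bs : seq (seq tok)) : seq tok :=
  match bs with
  | [::] => [::]
  | [:: b] => b
  | b :: bs' => b ++ TCm :: joincm bs'
  end.

Definition blocks (v1 : Vt) (vs : seq Vt) (sh : int * seq (seq tok)) : seq (seq tok) :=
  [seq p.1.2 ++ [:: Vert p.1.1; TEq; Val p.2]
  | p <- zip (zip (v1 :: vs) sh.2) (sh.1 :: chain_vals v1 sh.1 vs)].

Definition header (v1 : Vt) (vs : seq Vt) : seq tok := [:: Vert (last v1 vs); TEq; TQu].

Definition processed (v1 : Vt) (vs : seq Vt) (sh : int * seq (seq tok)) : seq tok :=
  header v1 vs ++ joincm (blocks v1 vs sh).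

(* (inp^k, lab^k) built from k+1 shots (the last one is the query shot) *)
Definition test_input (k : nat) (v1 : Vt) (vs : seq Vt) (shots : seq (int * seq (seq tok)))
  : seq tok :=
  flatten [seq processed v1 vs sh ++ [:: TDlm] | sh <- take k shots] ++
  (let qs := nth (0, [::]) shots k in
   header v1 vs ++ head [::] (blocks v1 vs qs) ++ [:: TCm]).

Definition test_label (k : nat) (v1 : Vt) (vs : seq Vt) (shots : seq (int * seq (seq tok)))
  : seq tok :=
  joincm (behead (blocks v1 vs (nth (0, [::]) shots k))).

End Setting.

(* Main.v *)
Require Import Defs.
From HB Require Import structures.
From mathcomp Require Import all_boot all_order all_algebra.
From mathcomp Require Import zify.
Set Implicit Arguments. Unset Strict Implicit. Unset Printing Implicit Defensive.
Import Order.TTheory GRing.Theory Num.Theory.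

Section Gen.
Variable Vt : finType.
Local Notation tok := (token Vt).

Lemma unif_argmax (s : seq tok) : s != [::] ->
  exists P, unif s = Some P /\ (forall a, is_argmax P a <-> a \in s).
Proof.
move=> hs; rewrite /unif.
have hu : undup s != [::].
  by case: s hs => // x s _; apply/negP => /eqP/(congr1 (fun l => x \in l)); rewrite mem_undup inE eqxx.
case E0: (undup s) hu => [//|y l] _.
eexists; split; first reflexivity.
have hpos : (0 < (size (y :: l))%:R^-1 :> rat)%R by rewrite invr_gt0 ltr0n.
move=> a; split.
- move=> h; apply/negPn/negP => ha.
  have := h y; rewrite (negbTE ha).
  have -> : y \in s by rewrite -mem_undup E0 inE eqxx.
  by rewrite leNgt hpos.
- move=> ha t'; rewrite ha; case: (t' \in s) => //; exact: ltW.
Qed.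

Lemma point_argmax (t0 a : tok) : is_argmax (point t0) a <-> a = t0.
Proof.
rewrite /is_argmax /point; split.
- by move=> h; have := h t0; rewrite eqxx; case: eqP => // _; rewrite ler10.
- by move=> -> t'; rewrite eqxx; case: (t' == t0) => //; rewrite ler01.
Qed.

Lemma current_cat (x s : seq tok) : TDlm \notin s -> current (x ++ TDlm :: s) = s.
Proof.
move=> hs; elim: x => [|t x IH] /=; first by rewrite (negbTE hs) ?eqxx.
by rewrite mem_cat inE ?eqxx ?orbT IH.
Qed.

Lemma prev_shots_cat (x s : seq tok) : TDlm \notin s ->
  prev_shots (x ++ TDlm :: s) = x ++ [:: TDlm].
Proof.
move=> hs; rewrite /prev_shots current_cat // size_cat /= addnS -addSn addnK.
by rewrite -cat_rcons take_size_cat ?size_rcons // cats1.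
Qed.

Definition getV (t : tok) : option Vt := if t is Vert v then Some v else None.
Definition vl (s : seq tok) : seq Vt := pmap getV s.

Lemma first_vert_vl s : first_vert s = ohead (vl s).
Proof. by elim: s => [|[v|x|v i| | | |] s IH] //=. Qed.

Lemma lookup_vl (u : Vt) s :
  first_vert (drop (index (Vert u) s).+1 s) = ohead (drop (index u (vl s)).+1 (vl s)).
Proof.
elim: s => [|t s IH] //=.
case: t => [v|x|v i| | | |] //=; rewrite /vl /=.
case: (eqVneq v u) => [->|hne].
  have -> : (Vert u == Vert u) = true by apply/eqP.
  by rewrite !drop0 first_vert_vl.
have -> : (Vert v == Vert u) = false by apply/negbTE; apply: contra hne => /eqP [->].
exact: IH.
Qed.

Lemma mem_vl u s : (Vert u \in s) = (u \in vl s).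
Proof.
elim: s => [|t s IH] //=; rewrite inE IH.
by case: t => [v|x|v i| | | |] //=; rewrite /vl /= inE.
Qed.

Lemma vl_cat s t : vl (s ++ t) = vl s ++ vl t.
Proof. exact: pmap_cat. Qed.

End Gen.

Section Steps.
Variable Vt : finType.
Variable inV : pred Vt.
Variable c : Vt -> Vt -> int.
Variable vals : Vt -> seq int.
Variable ncont : Vt -> nat.
Local Notation tok := (token Vt).
Local Notation Pp := (Pprog inV c vals ncont).

Variable x : seq tok.
Local Notation PS := (x ++ [:: TDlm]).

Lemma dlm_in Y : TDlm \in x ++ TDlm :: Y.
Proof. by rewrite mem_cat inE eqxx orbT. Qed.

Lemma PA Y X u q w : TDlm \notin Y -> Y = X ++ [:: Vert u; TEq; Val q; TCm] ->
  u \in vl PS -> ohead (drop (index u (vl PS)).+1 (vl PS)) = Some w ->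
  Pp (x ++ TDlm :: Y) = unif (CONT ncont w).
Proof.
move=> hY eY hu hw; rewrite /Pprog dlm_in /=.
have -> : rev (x ++ TDlm :: Y) = [:: TCm, Val q, TEq, Vert u & rev (x ++ TDlm :: X)].
  by rewrite eY -cat_cons catA rev_cat.
rewrite /rule_i prev_shots_cat // lookup_vl -mem_vl in hu *.
by rewrite index_mem hu hw.
Qed.


Lemma CONT_nil w : (0 < ncont w)%N -> CONT ncont w != [::].
Proof. by rewrite /CONT; case: (ncont w). Qed.

Lemma PA' Y X u q w : TDlm \notin Y -> Y = X ++ [:: Vert u; TEq; Val q; TCm] ->
  u \in vl PS -> ohead (drop (index u (vl PS)).+1 (vl PS)) = Some w -> (0 < ncont w)%N ->
  exists P, Pp (x ++ TDlm :: Y) = Some P /\ (forall a, is_argmax P a <-> a \in CONT ncont w).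
Proof.
move=> hY eY hu hw hn; rewrite (PA hY eY hu hw); exact: unif_argmax (CONT_nil hn).
Qed.

Lemma PB Y X w i r : Y = X ++ TCm :: rcons r (Ctx w i) -> all (isCtxOf w) r ->
  exists P, Pp (x ++ TDlm :: Y) = Some P /\
   (forall a, is_argmax P a <-> (a \in CONT ncont w /\ a \notin rcons r (Ctx w i)) \/ a = Vert w).
Proof.
move=> eY hr; rewrite /Pprog dlm_in /=.
have -> : rev (x ++ TDlm :: Y) = Ctx w i :: rev r ++ TCm :: rev (x ++ TDlm :: X).
  by rewrite eY -cat_cons catA rev_cat rev_cons rev_rcons /= cat_rcons.
rewrite /rule_ii.
have -> : find (fun t => ~~ isCtxOf w t) (Ctx w i :: rev r ++ TCm :: rev (x ++ TDlm :: X))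
   = (size r).+1.
  rewrite /= eqxx /= find_cat.
  have -> : has (fun t => ~~ isCtxOf w t) (rev r) = false.
    by apply/negbTE; rewrite has_rev -all_predC; apply: sub_all hr => t /= ->.
  by rewrite size_rev /= addn0.
have -> : take (size r).+1 (Ctx w i :: rev r ++ TCm :: rev (x ++ TDlm :: X)) = Ctx w i :: rev r.
  by rewrite /= -(size_rev r) take_size_cat.
have hne : [seq t <- CONT ncont w ++ [:: Vert w] | t \notin Ctx w i :: rev r] != [::].
  rewrite -has_filter; apply/hasP; exists (Vert w); first by rewrite mem_cat inE eqxx orbT.
  rewrite inE negb_or /= mem_rev; apply/negP => /(allP hr) /=; done.
have [P [-> hP]] := unif_argmax hne.
exists P; split => // a; rewrite hP mem_filter mem_cat mem_rcons !inE mem_rev.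
have hv : (Vert w \in r) = false by apply/negP => /(allP hr).
split.
- case/andP=> hn /orP [h|/eqP ->]; [left|right] => //.
- case=> [[h1 h2]|->]; first by rewrite h1 h2.
  by rewrite eqxx orbT andbT hv.
Qed.

Lemma PC Y X w : Y = X ++ [:: Vert w] -> Pp (x ++ TDlm :: Y) = Some (point TEq).
Proof.
move=> eY; rewrite /Pprog dlm_in /=.
by rewrite eY -cat_cons catA rev_cat.
Qed.

Lemma PE Y X q : Y = X ++ [:: Val q] -> Pp (x ++ TDlm :: Y) = Some (point TCm).
Proof.
move=> eY; rewrite /Pprog dlm_in /=.
by rewrite eY -cat_cons catA rev_cat.
Qed.


Lemma revY4 (run : seq tok) a b cc d e f :
  rev ([:: a; b; cc; d] ++ run ++ [:: e; f]) = f :: e :: (rev run ++ [:: d; cc; b; a]).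
Proof. by rewrite !rev_cat /=. Qed.

Lemma PD Y X u q w run : TDlm \notin Y ->
  Y = X ++ [:: Vert u; TEq; Val q; TCm] ++ run ++ [:: Vert w; TEq] ->
  all (isCtxOf w) run -> inV u -> inV w ->
  Pp (x ++ TDlm :: Y) = Some (point (Val (op c u w q))).
Proof.
move=> hY eY hr hu hw; rewrite /Pprog dlm_in /=.
have hrv : has (isVinV inV) (rev run) = false.
  by apply/negbTE; rewrite has_rev -all_predC; apply: sub_all hr => -[] //.
rewrite current_cat // eY -cat_cons catA rev_cat revY4 /= rev_cat revY4 /=.
rewrite /rule_iv hw /=.
set rb := (rev run ++ _) ++ rev X.
have -> : has (isVinV inV) rb by rewrite /rb !has_cat /= hu orbT.
have hf : find (isVinV inV) rb = size run + 3.
  by rewrite /rb -catA find_cat hrv size_rev /= hu.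
rewrite hf /rb -catA nth_cat size_rev ltnNge leq_addr /= addKn take_cat size_rev ltnNge leq_addr /= addKn.
by rewrite rev_cat.
Qed.

Lemma GDno Y X a : TDlm \notin Y -> Y = X ++ [:: a] -> (if a is Val _ then false else true) ->
  goal_done (x ++ TDlm :: Y) = false.
Proof.
move=> hY eY ha; rewrite /goal_done current_cat // eY rev_cat /=.
case: a {eY} ha => [v|z|v i| | | |] // _; by case: (X ++ _) => [|[] ?].
Qed.

Lemma GDval Y X g Y1 v q : TDlm \notin Y -> Y = Vert g :: Y1 -> Y = X ++ [:: Vert v; TEq; Val q] ->
  goal_done (x ++ TDlm :: Y) = (v == g).
Proof.
move=> hY e1 e2; rewrite /goal_done current_cat // {1}e1 e2 rev_cat /=.
done.
Qed.

End Steps.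

Section Main.
Variable Vt : finType.
Variable inV : pred Vt.
Variable c : Vt -> Vt -> int.
Variable vals : Vt -> seq int.
Variable ncont : Vt -> nat.
Local Notation tok := (token Vt).
Local Notation Pp := (Pprog inV c vals ncont).

Fixpoint expv (u : Vt) (q : int) (ws : seq Vt) : seq (Vt * int) :=
  match ws with
  | [::] => [::]
  | w :: ws' => (w, op c u w q) :: expv w (op c u w q) ws'
  end.

Variables (x Q : seq tok) (gl : Vt) (ch chb R : seq Vt).
Hypothesis hQd : TDlm \notin Q.
Hypothesis hQh : exists Q1, Q = Vert gl :: Q1.
Hypothesis hvl : vl (x ++ [:: TDlm]) = gl :: ch ++ R.
Hypothesis huniq : uniq ch.
Hypothesis hchl : ch = rcons chb gl.
Hypothesis hinV : all inV ch.
Hypothesis hnc : forall v, (0 < ncont v)%N.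

Local Notation inp := (x ++ TDlm :: Q).

Lemma inpE t : inp ++ t = x ++ TDlm :: (Q ++ t).
Proof. by rewrite -catA. Qed.

Lemma lookup pfx u w ws : ch = pfx ++ u :: w :: ws ->
  u \in vl (x ++ [:: TDlm]) /\ ohead (drop (index u (vl (x ++ [:: TDlm]))).+1 (vl (x ++ [:: TDlm]))) = Some w.
Proof.
move=> e; have hu := huniq; rewrite e cat_uniq /= in hu.
case/and3P: hu => _ hpu /andP [hu1 _].
have hglin : gl \in w :: ws.
  have := congr1 (last gl) e; rewrite hchl last_rcons last_cat /= => ->; exact: mem_last.
have hug : u != gl by apply: contraNneq hu1 => ->.
have hup : u \notin pfx by apply: contra hpu => h; rewrite /= h.
rewrite hvl e /= in_cons (negbTE hug) /= -catA mem_cat in_cons eqxx orbT; split => //.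
rewrite eq_sym (negbTE hug) index_cat (negbTE hup) /= eqxx addn0 drop_cat ltnNge leqnSn /= subSnn.
by [].
Qed.

Lemma goal_w pfx u w ws : ch = pfx ++ u :: w :: ws -> (w == gl) = (ws == [::]).
Proof.
move=> e; have hu := huniq; rewrite e cat_uniq /= in hu.
case/and3P: hu => _ _ /andP [_ /andP [hw _]].
have := congr1 (last gl) e; rewrite hchl last_rcons last_cat /= => ->.
case: ws {e} hw => [|w2 ws] /=; first by rewrite eqxx.
move=> hw; apply/negbTE; apply: contraNneq hw => ->; exact: mem_last.
Qed.


Definition stepP (t : seq tok) (a : tok) :=
  (exists P, Pp (inp ++ t) = Some P /\ is_argmax P a) /\ ~~ goal_done (inp ++ t).

Lemma gg_step out pre a rest : greedy_gen inV c vals ncont inp out ->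
  out = pre ++ a :: rest -> stepP pre a.
Proof.
case=> h1 h2 _ e.
have hi : (size pre < size out)%N by rewrite e size_cat /= addnS ltnS leq_addr.
have ht : take (size pre) out = pre by rewrite e take_size_cat.
have hn : nth TDlm out (size pre) = a by rewrite e nth_cat ltnn subnn.
by split; [have := h1 _ hi | have := h2 _ hi]; rewrite ht ?hn.
Qed.

Lemma gg_notend out pre rest : greedy_gen inV c vals ncont inp out ->
  out = pre ++ rest -> goal_done (inp ++ pre) = false -> exists a r, rest = a :: r.
Proof.
case=> _ _ h3 e hg; case: rest e => [|a r] e; last by exists a, r.
by move: h3; rewrite e cats0 hg.
Qed.

Lemma gg_stop out pre rest : greedy_gen inV c vals ncont inp out ->
  out = pre ++ rest -> goal_done (inp ++ pre) -> rest = [::].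
Proof.
move=> hg e hd; case: rest e => [//|a r] e.
by have [_ ] := gg_step hg e; rewrite hd.
Qed.

Lemma dec_ctx w (run s : seq tok) : all (isCtxOf w) run -> dec (run ++ s) = dec s.
Proof. by elim: run => [|[] // v i run IH] //= /andP [_ /IH]. Qed.

Lemma ctx_nodlm w (run : seq tok) : all (isCtxOf w) run -> TDlm \notin run.
Proof. by move=> h; apply/negP => /(allP h). Qed.

Lemma in_CONT w (a : tok) : a \in CONT ncont w -> exists i, a = Ctx w i.
Proof. by case/mapP => i _ ->; exists i. Qed.

Lemma CONT_ctx w (a : tok) : a \in CONT ncont w -> isCtxOf w a.
Proof. by case/in_CONT => i ->; rewrite /= eqxx. Qed.

Definition StateA pre u q ws :=
  [/\ TDlm \notin pre, exists X, Q ++ pre = X ++ [:: Vert u; TEq; Val q; TCm]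
    & exists pfx, ch = pfx ++ u :: ws].

Lemma uniq_main out : greedy_gen inV c vals ncont inp out ->
  forall n pre rest u q w ws, (size rest <= n)%N -> out = pre ++ rest ->
  StateA pre u q (w :: ws) -> dec rest = expv u q (w :: ws).
Proof.
move=> hg n; elim: n => [|n IH] pre rest u q w ws hs he [hpd [X eX] [pfx ech]].
all: have hY0 : TDlm \notin Q ++ pre by rewrite mem_cat negb_or hQd hpd.
all: have gd0 : goal_done (inp ++ pre) = false
       by rewrite inpE; apply: (@GDno _ x (Q ++ pre) (X ++ [:: Vert u; TEq; Val q]) TCm) => //; rewrite eX -catA.
all: have [a [r1 er]] := gg_notend hg he gd0.
  by move: hs; rewrite er.
have [hu hw] := lookup ech.
have [P [hP hPa]] := @PA' _ inV c vals ncont x (Q ++ pre) X u q w hY0 eX hu hw (hnc w).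
have [[P1 [hP1 ha]] _] := gg_step hg (etrans he (congr1 _ er)).
move: hP1; rewrite inpE hP => -[eP]; subst P1.
have /in_CONT [i ea] := (hPa a).1 ha; subst a.
have loop : forall m run r, (size r <= m)%N -> rest = run ++ r ->
    (exists r0 j, run = rcons r0 (Ctx w j)) -> all (isCtxOf w) run ->
    exists run2 r', rest = run2 ++ Vert w :: r' /\ all (isCtxOf w) run2.
  { elim=> [|m IHm] run r hr er2 [r0 [j erun]] hrun.
  all: have hY1 : TDlm \notin Q ++ pre ++ run
         by rewrite catA mem_cat negb_or hY0 (ctx_nodlm hrun).
  all: have gd1 : goal_done (inp ++ pre ++ run) = false
         by rewrite inpE; apply: (@GDno _ x (Q ++ pre ++ run) (Q ++ pre ++ r0) (Ctx w j)) => //;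
            rewrite erun -cats1 !catA.
  all: have e1 : out = (pre ++ run) ++ r by rewrite he er2 catA.
  all: have [b [r2 er3]] := gg_notend hg e1 gd1.
    by move: hr; rewrite er3.
  have e2 : out = (pre ++ run) ++ b :: r2 by rewrite e1 er3.
  have [[P2 [hP2 hb]] _] := gg_step hg e2.
  have hr0 : all (isCtxOf w) r0 by move: hrun; rewrite erun all_rcons => /andP [].
  have eY : Q ++ pre ++ run = (X ++ [:: Vert u; TEq; Val q]) ++ TCm :: rcons r0 (Ctx w j)
    by rewrite catA eX -erun -!catA.
  have [P3 [hP3 hP3a]] := @PB _ inV c vals ncont x (Q ++ pre ++ run) _ w j r0 eY hr0.
  move: hP2; rewrite inpE hP3 => -[eP]; subst P2.
  case: ((hP3a b).1 hb) => [[hbc hbn]|eb]; last by exists run, r2; rewrite er2 er3 eb.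
  have /in_CONT [j' eb] := hbc.
  apply: (IHm (rcons run b) r2).
  - by move: hr; rewrite er3.
  - by rewrite er2 er3 cat_rcons.
  - by exists run, j'; rewrite eb.
  - by rewrite all_rcons hrun (CONT_ctx hbc). }
have hc1 : all (isCtxOf w) [:: Ctx w i] by rewrite /= eqxx.
have [run2 [r' [er' hrun2]]] := loop (size r1) [:: Ctx w i] r1 (leqnn _) er
   (ex_intro _ [::] (ex_intro _ i erefl)) hc1.
have hY2 : TDlm \notin Q ++ pre ++ run2
  by rewrite catA mem_cat negb_or hY0 (ctx_nodlm hrun2).
have nd : forall l : seq tok, TDlm \notin l -> TDlm \notin Q ++ (pre ++ run2 ++ l).
  by move=> l hl; rewrite !catA mem_cat negb_or -!catA hY2.
set q' := op c u w q.
have hinu : inV u by apply: (allP hinV); rewrite ech mem_cat inE eqxx orbT.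
have hinw : inV w by apply: (allP hinV); rewrite ech mem_cat !inE eqxx !orbT.
have e3 : out = (pre ++ run2 ++ [:: Vert w]) ++ r' by rewrite he er' -!catA.
have gd2 : goal_done (inp ++ (pre ++ run2 ++ [:: Vert w])) = false.
  by rewrite inpE; apply: (@GDno _ x _ (Q ++ pre ++ run2) (Vert w)) => //; [apply: nd | rewrite -!catA].
have [b [r2 er2]] := gg_notend hg e3 gd2.
have e4 : out = (pre ++ run2 ++ [:: Vert w]) ++ b :: r2 by rewrite e3 er2.
have [[P4 [hP4 hb]] _] := gg_step hg e4.
move: hP4; rewrite inpE (@PC _ inV c vals ncont x _ (Q ++ pre ++ run2) w) ?(catA Q) -?catA // => -[eP]; subst P4.
move/point_argmax: hb => eb; subst b.
have e5 : out = (pre ++ run2 ++ [:: Vert w; TEq]) ++ r2 by rewrite e4 -!catA.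
have gd3 : goal_done (inp ++ (pre ++ run2 ++ [:: Vert w; TEq])) = false.
  by rewrite inpE; apply: (@GDno _ x _ (Q ++ pre ++ run2 ++ [:: Vert w]) TEq) => //; [apply: nd | rewrite -!catA].
have [b2 [r3 er3]] := gg_notend hg e5 gd3.
have e6 : out = (pre ++ run2 ++ [:: Vert w; TEq]) ++ b2 :: r3 by rewrite e5 er3.
have [[P5 [hP5 hb2]] _] := gg_step hg e6.
have eY5 : Q ++ pre ++ run2 ++ [:: Vert w; TEq] = X ++ [:: Vert u; TEq; Val q; TCm] ++ run2 ++ [:: Vert w; TEq].
  by rewrite catA eX -!catA.
move: hP5; rewrite inpE (@PD _ inV c vals ncont x _ X u q w run2 (nd [:: Vert w; TEq] erefl) eY5 hrun2 hinu hinw) => -[eP]; subst P5.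
move/point_argmax: hb2 => eb2; subst b2.
have -> : dec rest = (w, q') :: dec r3 by rewrite er' (dec_ctx _ hrun2) er2 er3.
rewrite /=; congr (_ :: _).
have e7 : out = (pre ++ run2 ++ [:: Vert w; TEq; Val q']) ++ r3 by rewrite e6 -!catA.
have [Q1 eQ] := hQh.
have gd4 : goal_done (inp ++ (pre ++ run2 ++ [:: Vert w; TEq; Val q'])) = (ws == [::]).
  rewrite inpE -(goal_w ech).
  apply: (@GDval _ x _ (Q ++ pre ++ run2) gl (Q1 ++ pre ++ run2 ++ [:: Vert w; TEq; Val q'])) => //.
  - exact: nd.
  - by rewrite eQ.
  - by rewrite -!catA.
case: ws ech gd4 => [|w2 ws2] ech gd4.
  by rewrite (gg_stop hg e7 gd4).
have [b3 [r4 er4]] := gg_notend hg e7 gd4.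
have e8 : out = (pre ++ run2 ++ [:: Vert w; TEq; Val q']) ++ b3 :: r4 by rewrite e7 er4.
have [[P6 [hP6 hb3]] _] := gg_step hg e8.
move: hP6; rewrite inpE (@PE _ inV c vals ncont x _ (Q ++ pre ++ run2 ++ [:: Vert w; TEq]) q') ?(catA Q) -?catA // => -[eP]; subst P6.
move/point_argmax: hb3 => eb3; subst b3.
rewrite er4 /=.
apply: (IH (pre ++ run2 ++ [:: Vert w; TEq; Val q'; TCm])).
- move: hs; rewrite er' er2 er3 er4 size_cat /= => h; clear -h; lia.
- by rewrite e8 -!catA.
- split.
  + by rewrite !mem_cat !negb_or hpd (ctx_nodlm hrun2).
  + by exists (Q ++ pre ++ run2); rewrite -!catA.
  + by exists (pfx ++ [:: u]); rewrite ech -catA.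
Qed.


End Main.

Section Main.
Variable Vt : finType.
Variable inV : pred Vt.
Variable c : Vt -> Vt -> int.
Variable vals : Vt -> seq int.
Variable ncont : Vt -> nat.
Local Notation tok := (token Vt).
Local Notation Pp := (Pprog inV c vals ncont).

Variables (x Q : seq tok) (gl : Vt) (ch chb R : seq Vt).
Hypothesis hQd : TDlm \notin Q.
Hypothesis hQh : exists Q1, Q = Vert gl :: Q1.
Hypothesis hvl : vl (x ++ [:: TDlm]) = gl :: ch ++ R.
Hypothesis huniq : uniq ch.
Hypothesis hchl : ch = rcons chb gl.
Hypothesis hinV : all inV ch.
Hypothesis hnc : forall v, (0 < ncont v)%N.

Local Notation inp := (x ++ TDlm :: Q).
Local Notation stepQ := (stepP inV c vals ncont x Q).
Definition PG (t : seq tok) := forall i, (i < size t)%N -> stepQ (take i t) (nth TDlm t i).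

Lemma PG_nil : PG [::].
Proof. by move=> i; rewrite ltn0. Qed.

Lemma PG_snoc t a : PG t -> stepQ t a -> PG (t ++ [:: a]).
Proof.
move=> h s i; rewrite size_cat addn1 ltnS leq_eqVlt => /orP [/eqP ->|hi].
  rewrite (take_size_cat _ (erefl (size t))) nth_cat ltnn subnn; exact: s.
rewrite (takel_cat _ (ltnW hi)) nth_cat hi; exact: h.
Qed.

Lemma PG_gg out : PG out -> goal_done (inp ++ out) -> greedy_gen inV c vals ncont inp out.
Proof. move=> h hd; split; [by move=> i /h [] | by move=> i /h [] | exact: hd]. Qed.

Lemma ctx0_in w : Ctx w 0 \in CONT ncont w.
Proof. by rewrite /CONT; apply: map_f; rewrite mem_iota add0n hnc. Qed.

Lemma block_steps pre u q w ws : StateA Q ch pre u q (w :: ws) -> PG pre ->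
  PG (pre ++ [:: Ctx w 0; Vert w; TEq; Val (op c u w q)]) /\
  goal_done (inp ++ (pre ++ [:: Ctx w 0; Vert w; TEq; Val (op c u w q)])) = (ws == [::]).
Proof.
move=> [hpd [X eX] [pfx ech]] hpg.
have hY0 : TDlm \notin Q ++ pre by rewrite mem_cat negb_or hQd hpd.
have nd : forall l : seq tok, TDlm \notin l -> TDlm \notin Q ++ (pre ++ l).
  by move=> l hl; rewrite catA mem_cat negb_or hY0.
have gd0 : goal_done (inp ++ pre) = false.
  by rewrite inpE; apply: (@GDno _ x (Q ++ pre) (X ++ [:: Vert u; TEq; Val q]) TCm hY0); rewrite ?eX -?catA.
have [hu hw] := lookup hvl huniq hchl ech.
have hinu : inV u by apply: (allP hinV); rewrite ech mem_cat inE eqxx orbT.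
have hinw : inV w by apply: (allP hinV); rewrite ech mem_cat !inE eqxx !orbT.
set q' := op c u w q.
have [Q1 eQ] := hQh.
have pg1 : PG (pre ++ [:: Ctx w 0]).
  apply: (PG_snoc hpg); split; last by rewrite gd0.
  have [P [hP hPa]] := @PA' _ inV c vals ncont x (Q ++ pre) X u q w hY0 eX hu hw (hnc w).
  exists P; rewrite inpE hP; split; first by [].
  apply/hPa; exact: ctx0_in.
have pg2 : PG (pre ++ [:: Ctx w 0; Vert w]).
  rewrite -[[:: Ctx w 0; Vert w]]/([:: Ctx w 0] ++ [:: Vert w]) catA.
  apply: (PG_snoc pg1); split.
    have eY : Q ++ pre ++ [:: Ctx w 0] = (X ++ [:: Vert u; TEq; Val q]) ++ TCm :: rcons [::] (Ctx w 0).
      by rewrite catA eX -!catA.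
    have [P [hP hPa]] := @PB _ inV c vals ncont x _ _ w 0 [::] eY isT.
    exists P; rewrite inpE hP; split; first by [].
    by apply/hPa; right.
  rewrite inpE (@GDno _ x _ (Q ++ pre) (Ctx w 0)); first by [].
  - exact: nd.
  - by rewrite catA.
  - by [].
have pg3 : PG (pre ++ [:: Ctx w 0; Vert w; TEq]).
  rewrite -[[:: Ctx w 0; Vert w; TEq]]/([:: Ctx w 0; Vert w] ++ [:: TEq]) catA.
  apply: (PG_snoc pg2); split.
    exists (point TEq); rewrite inpE (@PC _ inV c vals ncont x _ (Q ++ pre ++ [:: Ctx w 0]) w).
      by split; [ | exact/point_argmax].
    by rewrite -!catA.
  rewrite inpE (@GDno _ x _ (Q ++ pre ++ [:: Ctx w 0]) (Vert w)); first by [].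
  - exact: nd.
  - by rewrite -!catA.
  - by [].
have hc1 : all (isCtxOf w) [:: Ctx w 0] by rewrite /= eqxx.
split.
  rewrite -[[:: Ctx w 0; Vert w; TEq; Val q']]/([:: Ctx w 0; Vert w; TEq] ++ [:: Val q']) catA.
  apply: (PG_snoc pg3); split.
    exists (point (Val q')); rewrite inpE (@PD _ inV c vals ncont x _ X u q w [:: Ctx w 0]).
    - by split; [ | exact/point_argmax].
    - exact: nd.
    - by rewrite (catA Q) eX -!catA.
    - exact: hc1.
    - exact: hinu.
    - exact: hinw.
  rewrite inpE (@GDno _ x _ (Q ++ pre ++ [:: Ctx w 0; Vert w]) TEq); first by [].
  - exact: nd.
  - by rewrite -!catA.
  - by [].
rewrite inpE -(goal_w huniq hchl ech).
apply: (@GDval _ x _ (Q ++ pre ++ [:: Ctx w 0]) gl (Q1 ++ pre ++ [:: Ctx w 0; Vert w; TEq; Val q'])).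
- exact: nd.
- by rewrite eQ.
- by rewrite -!catA.
Qed.

Lemma exist_main ws : forall pre u q w, StateA Q ch pre u q (w :: ws) -> PG pre ->
  exists out, greedy_gen inV c vals ncont inp out.
Proof.
elim: ws => [|w2 ws IH] pre u q w hst hpg.
  have [pg gd] := block_steps hst hpg.
  by exists (pre ++ [:: Ctx w 0; Vert w; TEq; Val (op c u w q)]); apply: PG_gg pg _; rewrite gd.
have [pg gd] := block_steps hst hpg.
case: hst => hpd [X eX] [pfx ech].
set q' := op c u w q.
apply: (IH (pre ++ [:: Ctx w 0; Vert w; TEq; Val q'; TCm]) w q' w2).
- split.
  + by rewrite mem_cat negb_or hpd.
  + by exists (Q ++ pre ++ [:: Ctx w 0]); rewrite -!catA.
  + by exists (pfx ++ [:: u]); rewrite ech -catA.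
- rewrite -[[:: Ctx w 0; Vert w; TEq; Val q'; TCm]]/([:: Ctx w 0; Vert w; TEq; Val q'] ++ [:: TCm]) catA.
  apply: (PG_snoc pg); split; last by rewrite gd.
  exists (point TCm); rewrite inpE (@PE _ inV c vals ncont x _ (Q ++ pre ++ [:: Ctx w 0; Vert w; TEq]) q').
    by split; [ | exact/point_argmax].
  by rewrite -!catA.
Qed.

End Main.

Section Chain.
Variable Vt : finType.
Variable inV : pred Vt.
Variable E : rel Vt.

Lemma nuniq_split (s : seq Vt) : ~~ uniq s -> exists a y b d, s = a ++ y :: b ++ y :: d.
Proof.
elim: s => [//|z s IH] /=; rewrite negb_and negbK; case/orP.
  by case/splitPr => p1 p2; exists [::], z, p1, p2.
by case/IH => a [y [b [d ->]]]; exists (z :: a), y, b, d.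
Qed.

Lemma is_chainE s : is_chain inV E s = [&& s != [::], all inV s & sorted E s].
Proof. by case: s. Qed.

Lemma chain_uniq N s : (forall ws, is_chain inV E ws -> (size ws <= N)%N) ->
  is_chain inV E s -> size s = N -> uniq s.
Proof.
move=> hN hs hsz; apply/negPn/negP => /nuniq_split [a [y [b [d es]]]].
have : is_chain inV E (a ++ y :: b ++ y :: b ++ y :: d).
  move: hs; rewrite !is_chainE es => /and3P [_ hall hsr].
  apply/and3P; split; first by case: a {es hall hsr}.
  - by move: hall; rewrite !all_cat /= !all_cat /= => /and5P [h1 h2 h3 h4 h5]; rewrite all_cat /= h1 h2 h3 h5.
  - by move: hsr; rewrite !sorted_cat_cons !cat_path /= => /and4P [h1 h2 h3 h4]; rewrite cat_path /= h1 h2 h3 h4.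

move/hN; rewrite -hsz es !size_cat /= size_cat /=; lia.
Qed.

End Chain.

Section Blocks.
Variable Vt : finType.
Local Notation tok := (token Vt).

Definition blk (p : (Vt * seq tok) * int) : seq tok := p.1.2 ++ [:: Vert p.1.1; TEq; Val p.2].

Lemma joincm_cons (b : seq tok) bs :
  joincm (b :: bs) = b ++ (if bs is [::] then [::] else TCm :: joincm bs).
Proof. by case: bs => [|b' bs] //=; rewrite cats0. Qed.

Lemma vl_ctx w (cs : seq tok) : all (isCtxOf w) cs -> vl cs = [::].
Proof. by elim: cs => [|[] // v i cs IH] //= /andP [_ /IH]. Qed.

Lemma vl_tail (bs : seq (seq tok)) :
  vl (if bs is [::] then [::] else TCm :: joincm bs) = vl (joincm bs).
Proof. by case: bs. Qed.

Lemma dec_tail (bs : seq (seq tok)) :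
  dec (if bs is [::] then [::] else TCm :: joincm bs) = dec (joincm bs).
Proof. by case: bs. Qed.

Definition ctxs_ok (ws : seq Vt) (css : seq (seq tok)) :=
  all (fun p => all (isCtxOf p.1) p.2) (zip ws css).

Lemma vl_blocks ws css qs : size css = size ws -> size qs = size ws -> ctxs_ok ws css ->
  vl (joincm (map blk (zip (zip ws css) qs))) = ws.
Proof.
elim: ws css qs => [|w ws IH] [|cs css] [|q qs] // [hc] [hq] /andP [h1 h2].
rewrite joincm_cons vl_cat /blk /= vl_cat (vl_ctx h1) /= vl_tail IH //.
Qed.

Lemma dec_blocks ws css qs : size css = size ws -> size qs = size ws -> ctxs_ok ws css ->
  dec (joincm (map blk (zip (zip ws css) qs))) = zip ws qs.
Proof.
elim: ws css qs => [|w ws IH] [|cs css] [|q qs] // [hc] [hq] /andP [h1 h2].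
rewrite joincm_cons /blk /= -catA (dec_ctx _ h1) /= dec_tail IH //.
Qed.

End Blocks.

Lemma size_chain_vals (Vt : finType) (c : Vt -> Vt -> int) u q ws :
  size (chain_vals c u q ws) = size ws.
Proof. by elim: ws u q => [|w ws IH] u q //=; rewrite IH. Qed.

Lemma expvE (Vt : finType) (c : Vt -> Vt -> int) u q ws :
  expv c u q ws = zip ws (chain_vals c u q ws).
Proof. by elim: ws u q => [|w ws IH] u q //=; rewrite IH. Qed.

Lemma okctx (Vt : finType) (ncont : Vt -> nat) ws css :
  all (fun p => ctx_ok ncont p.1 p.2) (zip ws css) -> ctxs_ok ws css.
Proof.
move=> h; apply: sub_all h => -[v cs] /and3P [_ _ h] /=.
by apply: sub_all h => t /CONT_ctx.
Qed.

Lemma flat_split (A : Type) (Vt : finType) (f : A -> seq (token Vt)) (L : seq A) : (0 < size L)%N ->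
  exists x, flatten [seq f s ++ [:: TDlm] | s <- L] = x ++ [:: TDlm].
Proof.
case/lastP: L => [//|L z] _; rewrite map_rcons flatten_rcons.
by exists (flatten [seq f s ++ [:: TDlm] | s <- L] ++ f z); rewrite !catA.
Qed.

Unset Implicit Arguments.

Theorem lemma2 (Vt : finType) (inV : pred Vt) (E : rel Vt) (c : Vt -> Vt -> int)
    (vals : Vt -> seq int) (ncont : Vt -> nat) (N K k : nat)
    (v1 : Vt) (vs : seq Vt) (shots : seq (int * seq (seq (token Vt)))) :
  (forall u v, E u v -> inV u && inV v) ->
  (forall u v q, E u v -> q \in vals u -> (op c u v q \in vals v)) ->
  (forall v, (0 < ncont v)%N) ->
  (forall ws, is_chain inV E ws -> (size ws <= N)%N) ->
  is_chain inV E (v1 :: vs) -> size (v1 :: vs) = N ->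
  (2 <= N)%N ->
  (1 <= k <= K)%N ->
  size shots = k.+1 ->
  all (shot_ok vals ncont v1 vs) shots ->
  let inp := test_input c k v1 vs shots in
  let lab := test_label c k v1 vs shots in
  (exists out, greedy_gen inV c vals ncont inp out) /\
  (forall out, greedy_gen inV c vals ncont inp out -> dec out = dec lab).
Proof.
move=> hE hop hnc hN hch hsz hN2 hk hsh hall inp lab; rewrite {}/inp {}/lab.
have hun := chain_uniq hN hch hsz.
have hinV : all inV (v1 :: vs) by case/andP: hch.
have [w [vs' evs]] : exists w vs', vs = w :: vs'.
  by case: vs {hch hun hinV hall} hsz => [|w vs'] /= hs; [lia | exists w, vs'].
case: shots hsh hall => [//|sh0 shs] hsh hall.
case: k hk hsh => [//|k'] hk hsh.
set qs := nth (0%R, [::]) (sh0 :: shs) k'.+1.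
have hqs : shot_ok vals ncont v1 vs qs.
  by apply: (allP hall); apply: mem_nth; rewrite hsh.
have hsh0 : shot_ok vals ncont v1 vs sh0 by case/andP: hall.
case/and3P: hqs => _ /eqP hqsz hqok.
case/and3P: hsh0 => _ /eqP h0sz h0ok.
case eq2 : qs.2 hqsz hqok => [//|cs1 css'] hqsz hqok.
have hcs1 : all (isCtxOf v1) cs1 by move: (okctx hqok) => /= /andP [].
set gl := last v1 vs.
have vlp : vl (processed c v1 vs sh0) = gl :: v1 :: vs.
  rewrite /processed vl_cat /=.
  change (blocks c v1 vs sh0) with
    (map (@blk Vt) (zip (zip (v1 :: vs) sh0.2) (sh0.1 :: chain_vals c v1 sh0.1 vs))).
  rewrite vl_blocks //; [by rewrite /= size_chain_vals | exact: (okctx h0ok)].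
have [x hx] := flat_split (processed c v1 vs) (L := take k'.+1 (sh0 :: shs)) isT.
set R := vl (flatten [seq processed c v1 vs sh ++ [:: TDlm] | sh <- take k' shs]).
have hvl : vl (x ++ [:: TDlm]) = gl :: (v1 :: vs) ++ R.
  rewrite -hx.
  have -> : take k'.+1 (sh0 :: shs) = sh0 :: take k' shs by [].
  have -> : forall L, flatten [seq processed c v1 vs sh ++ [:: TDlm] | sh <- sh0 :: L] =
     (processed c v1 vs sh0 ++ [:: TDlm]) ++ flatten [seq processed c v1 vs sh ++ [:: TDlm] | sh <- L] by [].
  rewrite (vl_cat (processed c v1 vs sh0 ++ [:: TDlm])) (vl_cat (processed c v1 vs sh0)) vlp -/R.
  by rewrite [vl [:: TDlm]]/= cats0.
set Q := header v1 vs ++ head [::] (blocks c v1 vs qs) ++ [:: TCm].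
have eQ : Q = [:: Vert gl; TEq; TQu] ++ (cs1 ++ [:: Vert v1; TEq; Val qs.1]) ++ [:: TCm].
  by rewrite /Q /blocks eq2.
have einp : test_input c k'.+1 v1 vs (sh0 :: shs) = x ++ TDlm :: Q by rewrite /test_input hx -catA.
have hQd : TDlm \notin Q.
  by rewrite eQ !mem_cat (negbTE (ctx_nodlm hcs1)).
have hQh : exists Q1, Q = Vert gl :: Q1 by rewrite eQ; eexists.
have hchl : v1 :: vs = rcons (belast v1 vs) gl by rewrite lastI.
have hst : StateA Q (v1 :: vs) [::] v1 qs.1 (w :: vs').
  split => //.
  - by exists ([:: Vert gl; TEq; TQu] ++ cs1); rewrite eQ cats0 -!catA.
  - by exists [::]; rewrite evs.
rewrite einp; split.
  exact: (exist_main hQd hQh hvl hun hchl hinV hnc hst (PG_nil _ _ _ _ _ _)).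
move=> out hg.
rewrite (uniq_main hQd hQh hvl hun hchl hinV hnc hg (leqnn _) (erefl : out = [::] ++ out) hst).
rewrite /test_label -/qs /blocks eq2 /=.
rewrite -[LHS]/(expv c v1 qs.1 (w :: vs')) -evs expvE.
change [seq _ | p <- _] with (map (@blk Vt) (zip (zip vs css') (chain_vals c v1 qs.1 vs))).
have [hsz'] : size css' = size vs by move: hqsz => [].
rewrite dec_blocks //; first by rewrite size_chain_vals.
by move: (okctx hqok) => /= /andP [].
Qed.
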